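(* Let $c\ge2$ and let $\Gamma=(V,E)$ be a $c$-uniform unoriented hypergraph with $E\ne\varnothing$ and no isolated vertices, with smallest normalized Laplacian eigenvalue $\lambda_1$ and strong coloring number $\chi$. If $\chi=\dfrac{c-\lambda_1}{1-\lambda_1}$, then for every proper strong $\chi$-coloring with color classes $V_1,\dots,V_\chi$, for all $v\in V$ and all $1\le i\le\chi$, \[ \bigl|\{e\in E: v\in e,\ e\cap V_i\neq\varnothing\}\bigr|=\begin{cases}\dfrac{(c-1)\deg v}{\chi-1}, & v\notin V_i,\\[2mm] \deg v, & v\in V_i.\end{cases} \]
   Context: A hypergraph has finite vertex set $V$ and edge set $E\subseteq\mathcal P(V)$; it is $c$-uniform if $|e|=c$ for all $e$, and unoriented means all incidences have orientation $+1$. $\deg v=|\{e\in E: v\in e\}|\ge1$, $D=\mathrm{diag}(\deg v)$, adjacency $A_{v,v}=0$ and $A_{v,w}=-|\{e\in E: v,w\in e\}|$ for $v\ne w$, normalized Laplacian $L=\mathrm{Id}-D^{-1}A$ with eigenvalues $\lambda_1\le\dots\le\lambda_N$. A proper strong $k$-coloring is a map $V\to\{1,\dots,k\}$ such that any two distinct vertices in a common edge receive different colors; $\chi$ is the least such $k$. *)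

(* Defs.v *)
From mathcomp Require Import all_boot all_order all_algebra.
Set Implicit Arguments. Unset Strict Implicit. Unset Printing Implicit Defensive.
Import Order.TTheory GRing.Theory Num.Theory.
Local Open Scope ring_scope.

Section Hyper.
Variable n : nat.
Implicit Types (E : {set {set 'I_n}}) (v w : 'I_n).

Definition hdeg E v : nat := #|[set e in E | v \in e]|.

Definition hcommon E v w : nat := #|[set e in E | (v \in e) && (w \in e)]|.

Definition uniform E (c : nat) : Prop := forall e, e \in E -> #|e| = c.

Variable R : fieldType.

Definition hdegmx E : 'M[R]_n := diag_mx (\row_v ((hdeg E v)%:R : R)).

(* adjacency: A_{v,v} = 0, A_{v,w} = - #{e : v,w in e} for v <> w
   (unoriented hypergraph: all incidence orientations +1) *)
Definition hadj E : 'M[R]_n :=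
  \matrix_(v, w) (if v == w then 0 else - ((hcommon E v w)%:R : R)).

Definition hlaplacian E : 'M[R]_n := 1%:M - invmx (hdegmx E) *m hadj E.

End Hyper.

Definition proper_strong n (E : {set {set 'I_n}}) k (f : {ffun 'I_n -> 'I_k}) : bool :=
  [forall e in E, forall x in e, forall y in e, (x != y) ==> (f x != f y)].

Lemma exists_strong_coloring n (E : {set {set 'I_n}}) :
  exists k, [exists f : {ffun 'I_n -> 'I_k}, proper_strong E f].
Proof.
exists n; apply/existsP; exists [ffun x => x].
apply/forallP => e; apply/implyP => _; apply/forallP => x; apply/implyP => _.
apply/forallP => y; apply/implyP => _; apply/implyP.
by rewrite !ffunE.
Qed.

Definition strong_chi n (E : {set {set 'I_n}}) : nat := ex_minn (exists_strong_coloring E).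

(* Main.v *)
Require Import Defs.
From mathcomp Require Import all_boot all_order all_algebra.
From mathcomp Require Import reals.
From mathcomp.real_closed Require Import complex.
From mathcomp Require Import ring lra.
Import Order.TTheory GRing.Theory Num.Theory.
Local Open Scope ring_scope.

Module SpecM.
Set Implicit Arguments. Unset Strict Implicit. Unset Printing Implicit Defensive.
Local Open Scope sesquilinear_scope.

Section Spec.
Variable R : rcfType.
Local Notation toC := (real_complex R).

Lemma toC_le (a b : R) : (toC a <= toC b) = (a <= b).
Proof. by rewrite -subr_ge0 -rmorphB ler0c subr_ge0. Qed.

Lemma psd_min_eig n (S : 'M[R]_n) (mu : R) :
  S^T = S -> (forall s, eigenvalue S s -> mu <= s) ->
  forall z : 'rV[R]_n, mu * (z *m z^T) 0 0 <= (z *m S *m z^T) 0 0.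
Proof.
move=> Ssym Hmu z.
pose SC := map_mx toC S.
have SCsym : SC \is symmetricmx.
  apply/is_hermitianmxP; rewrite expr0 scale1r map_mx_id // /SC map_trmx Ssym.
  done.
have SCreal : SC \is a realmx.
  apply/mxOverP => i j; rewrite mxE; apply/complex_realP; by exists (S i j).
have Sherm := realsym_hermsym SCsym SCreal.
have /orthomx_spectralP SCE := hermitian_normalmx Sherm.
have dreal := hermitian_spectral_diag_real Sherm.
move: SCE dreal.
set P := spectralmx SC; set d := spectral_diag SC => SCE dreal.
have Pu : P \is unitarymx := spectral_unitarymx SC.
have PPt : P *m P^t* = 1%:M := unitarymxP Pu.
have PtP : P^t* *m P = 1%:M := mulmx1C PPt.
have iP : invmx P = P^t* := invmx_unitary Pu.
have dge : forall j, toC mu <= d 0 j.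
  move=> j.
  have /complex_realP [r dr] : d 0 j \is Num.real by move/mxOverP: dreal; apply.
  have eSC : eigenvalue SC (d 0 j).
    apply/eigenvalueP; exists (row j P).
      rewrite -row_mul.
      have -> : P *m SC = diag_mx d *m P.
        by rewrite {1}SCE !mulmxA iP PPt mul1mx.
      by rewrite row_mul row_diag_mx -scalemxAl -rowE.
    apply/eqP => Pj0.
    have := congr1 (row j) PPt; rewrite row_mul Pj0 mul0mx => /rowP /(_ j).
    by rewrite !mxE eqxx /= => /eqP; rewrite eq_sym oner_eq0.
  rewrite dr toC_le; apply: Hmu.
  move: eSC; rewrite dr.
  rewrite !eigenvalue_root_char -map_char_poly.
  by rewrite (fmorph_root (real_complex R)).
pose zC := map_mx toC z.
have zCt : zC^t* = zC^T.
  apply/matrixP => i j; rewrite !mxE conj_Creal //; apply/complex_realP.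
  by exists (z j i).
pose y := zC *m P^t*.
have yt : y^t* = P *m zC^t*.
  by rewrite /y trmx_mul map_mxM trmxCK.
have k1 : toC ((z *m S *m z^T) 0 0) = \sum_j y 0 j * d 0 j * (y 0 j)^*.
  have -> : toC ((z *m S *m z^T) 0 0) = (zC *m SC *m zC^T) 0 0.
    have e : map_mx toC (z *m S *m z^T) = zC *m SC *m zC^T.
      by rewrite !map_mxM map_trmx.
    by rewrite -e [RHS]mxE; reflexivity.
  rewrite -zCt SCE iP !mulmxA -/y -mulmxA -yt mul_mx_diag mxE.
  by apply: eq_bigr => j _; rewrite !mxE.
have k2 : toC ((z *m z^T) 0 0) = \sum_j y 0 j * (y 0 j)^*.
  have -> : toC ((z *m z^T) 0 0) = (zC *m zC^T) 0 0.
    have e : map_mx toC (z *m z^T) = zC *m zC^T.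
      by rewrite !map_mxM map_trmx.
    by rewrite -e [RHS]mxE; reflexivity.
  have -> : zC *m zC^T = y *m y^t*.
    by rewrite yt /y zCt mulmxA -(mulmxA zC) PtP mulmx1.
  rewrite mxE.
  by apply: eq_bigr => j _; rewrite !mxE.
rewrite -toC_le rmorphM /= k1 k2 mulr_sumr; apply: ler_sum => j _.
rewrite -!mulrA [X in _ <= X]mulrCA.
by apply: ler_wpM2r; [apply: mul_conjC_ge0 | apply: dge].
Qed.
End Spec.

End SpecM.
Import SpecM.

Module CombM.
Set Implicit Arguments. Unset Strict Implicit. Unset Printing Implicit Defensive.
Local Close Scope ring_scope.
Local Open Scope nat_scope.

Section Comb.
Variables (n : nat) (E : {set {set 'I_n}}).

Lemma card_sepE (P : {set 'I_n} -> bool) :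
  #|[set e in E | P e]| = \sum_(e in E) P e.
Proof.
rewrite -sum1_card big_mkcond [RHS]big_mkcond /=.
by apply: eq_bigr => e _; rewrite inE; case: (e \in E); case: (P e).
Qed.

Lemma sum_nonadj (c : nat) v : uniform E c ->
  \sum_w (if v == w then 0 else hcommon E v w) = (c - 1) * hdeg E v.
Proof.
move=> unifE.
rewrite /hdeg card_sepE big_distrr /=.
under eq_bigr => w _ do rewrite /hcommon card_sepE.
rewrite (eq_bigr (fun w => \sum_(e in E) ((v \in e) && (w \in e) && (v != w)))); last first.
  move=> w _; case: eqP => [->|_]; last by apply: eq_bigr => e _; rewrite andbT.
  by rewrite big1 // => e _; rewrite andbF.
rewrite exchange_big /=; apply: eq_bigr => e eE.
case ve: (v \in e) => /=; last by rewrite muln0 big1.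
rewrite muln1 -(unifE e eE) (cardsD1 v e) ve add1n subSS.
rewrite subn0 -sum1_card [RHS]big_mkcond /=; apply: eq_bigr => w _.
by rewrite !inE eq_sym; case: (w \in e); case: (w == v).
Qed.

Lemma properP k (f : {ffun 'I_n -> 'I_k}) : proper_strong E f ->
  forall e, e \in E -> forall x y, x \in e -> y \in e -> x != y -> f x != f y.
Proof.
move=> /forallP pf e eE x y xe ye xy.
move: (pf e); rewrite eE /= => /forallP /(_ x); rewrite xe /= => /forallP /(_ y).
by rewrite ye xy.
Qed.

Lemma sum_color k (f : {ffun 'I_n -> 'I_k}) v i :
  proper_strong E f -> f v != i ->
  \sum_w (f w == i) * (if v == w then 0 else hcommon E v w) =
  #|[set e in E | (v \in e) && [exists w in e, f w == i]]|.
Proof.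
move=> /properP pf fvi.
rewrite card_sepE.
rewrite (eq_bigr (fun w => \sum_(e in E) ((f w == i) * ((v \in e) && (w \in e))))); last first.
  move=> w _; case: (eqVneq v w) => [<-|_]; first by rewrite (negbTE fvi) mul0n big1.
  by rewrite /hcommon card_sepE big_distrr.
rewrite exchange_big /=; apply: eq_bigr => e eE.
case ve: (v \in e) => /=; last by rewrite big1 // => w _; rewrite muln0.
case: existsP => [[w0 /andP[w0e fw0]]|nex].
  rewrite (bigD1 w0) //= w0e fw0 /= big1 // => w ww0.
  case we: (w \in e); rewrite ?muln0 // muln1.
  case fw: (f w == i) => //.
  have := pf e eE w w0 we w0e ww0.
  by rewrite (eqP fw) (eqP fw0) eqxx.
rewrite big1 // => w _.
case we: (w \in e); rewrite ?muln0 // muln1.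
case fw: (f w == i) => //.
by exfalso; apply: nex; exists w; rewrite we fw.
Qed.
End Comb.

Lemma hcommon_same n (E : {set {set 'I_n}}) k (f : {ffun 'I_n -> 'I_k}) v w :
  proper_strong E f -> v != w -> f v = f w -> hcommon E v w = 0.
Proof.
move=> /properP pf vw fvw; rewrite /hcommon card_sepE big1 // => e eE.
case ve: (v \in e); case we: (w \in e) => //=.
by have := pf e eE v w ve we vw; rewrite fvw eqxx.
Qed.


End CombM.
Import CombM.

Module AuxM.
Set Implicit Arguments. Unset Strict Implicit. Unset Printing Implicit Defensive.
Section Lin.
Variables (R : realType) (n : nat) (E : {set {set 'I_n}}).
Hypothesis hpos : forall v, (0 < hdeg E v)%N.

Definition Wf (v w : 'I_n) : R := if v == w then 0 else (hcommon E v w)%:R.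
Definition Wm : 'M[R]_n := \matrix_(v, w) Wf v w.
Definition dg (v : 'I_n) : R := (hdeg E v)%:R.
Definition sq : 'rV[R]_n := \row_v Num.sqrt (dg v).
Definition isq : 'rV[R]_n := \row_v (Num.sqrt (dg v))^-1.

Lemma sq_gt0 v : 0 < Num.sqrt (dg v).
Proof. by rewrite sqrtr_gt0 /dg ltr0n. Qed.

Lemma SdSi : diag_mx sq *m diag_mx isq = 1%:M.
Proof.
rewrite mulmx_diag -diag_const_mx; congr diag_mx; apply/rowP => j.
by rewrite !mxE divff // gt_eqF // sq_gt0.
Qed.

Lemma SiSd : diag_mx isq *m diag_mx sq = 1%:M.
Proof.
rewrite mulmx_diag -diag_const_mx; congr diag_mx; apply/rowP => j.
by rewrite !mxE mulVf // gt_eqF // sq_gt0.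
Qed.

Lemma SdSd : diag_mx sq *m diag_mx sq = hdegmx R E.
Proof.
rewrite mulmx_diag /hdegmx; congr diag_mx; apply/rowP => j.
by rewrite !mxE -expr2 sqr_sqrtr // ler0n.
Qed.

Lemma invD : invmx (hdegmx R E) = diag_mx isq *m diag_mx isq.
Proof.
have h : hdegmx R E *m (diag_mx isq *m diag_mx isq) = 1%:M.
  by rewrite -SdSd -mulmxA (mulmxA (diag_mx sq) (diag_mx isq)) SdSi mul1mx SdSi.
have [u _] := mulmx1_unit h.
by rewrite -[RHS]mul1mx -(mulVmx u) -mulmxA h mulmx1.
Qed.

Lemma hadjE : hadj R E = - Wm.
Proof.
apply/matrixP => v w; rewrite !mxE /Wf.
by case: (v == w); rewrite ?oppr0.
Qed.

Lemma hcommonC v w : hcommon E v w = hcommon E w v.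
Proof. by apply: eq_card => e; rewrite !inE (andbC (v \in e)). Qed.

Lemma Wm_sym : Wm^T = Wm.
Proof.
apply/matrixP => v w; rewrite !mxE /Wf eq_sym hcommonC //.
Qed.

Definition Sm := diag_mx isq *m Wm *m diag_mx isq.

Lemma Sm_sym : Sm^T = Sm.
Proof. by rewrite /Sm !trmx_mul tr_diag_mx Wm_sym mulmxA. Qed.

Lemma eig_link s : eigenvalue Sm s -> eigenvalue (hlaplacian R E) (1 + s).
Proof.
move=> /eigenvalueP [v vS v0]; apply/eigenvalueP.
exists (v *m diag_mx sq).
  have e1 : v *m diag_mx isq *m Wm = s *: (v *m diag_mx sq).
    move: vS; rewrite /Sm !mulmxA => vS.
    by rewrite -[LHS]mulmx1 -SiSd !mulmxA vS -scalemxAl.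
  rewrite /hlaplacian invD hadjE mulmxBr mulmx1 scalerDl scale1r.
  congr (_ + _).
  rewrite !mulmxN opprK -!mulmxA (mulmxA (diag_mx sq)) SdSi mul1mx mulmxA.
  by rewrite e1.
apply: contra v0 => /eqP h; apply/eqP.
by rewrite -[v]mulmx1 -SdSi mulmxA h mul0mx.
Qed.

Lemma form_ge (mu : R) : (forall s, eigenvalue Sm s -> mu <= s) ->
  forall x : 'rV[R]_n,
    mu * (x *m hdegmx R E *m x^T) 0 0 <= (x *m Wm *m x^T) 0 0.
Proof.
move=> Hmu x.
have := psd_min_eig Sm_sym Hmu (x *m diag_mx sq).
rewrite trmx_mul tr_diag_mx.
have -> : x *m diag_mx sq *m (diag_mx sq *m x^T) = x *m hdegmx R E *m x^T.
  by rewrite -SdSd !mulmxA.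
have -> : x *m diag_mx sq *m Sm *m (diag_mx sq *m x^T) = x *m Wm *m x^T.
  rewrite /Sm !mulmxA -(mulmxA x) SdSi mulmx1 -!mulmxA.
  by rewrite (mulmxA (diag_mx isq)) SiSd mul1mx.
done.
Qed.

Lemma quadE (x : 'rV[R]_n) (A : 'M[R]_n) :
  (x *m A *m x^T) 0 0 = \sum_v \sum_w x 0 v * A v w * x 0 w.
Proof.
rewrite mxE exchange_big /=; apply: eq_bigr => w _.
by rewrite !mxE mulr_suml; apply: eq_bigr => v _.
Qed.

End Lin.


Lemma psd_ker (R : realFieldType) n (M : 'I_n -> 'I_n -> R) :
  (forall v w, M v w = M w v) ->
  (forall x : 'I_n -> R, 0 <= \sum_v \sum_w x v * M v w * x w) ->
  forall x, \sum_v \sum_w x v * M v w * x w = 0 ->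
  forall v, \sum_w M v w * x w = 0.
Proof.
move=> Msym psd x qx0.
pose y v := \sum_w M v w * x w.
pose a := \sum_v y v * y v.
pose b := \sum_v \sum_w y v * M v w * y w.
have b0 : 0 <= b := psd y.
have a1 : \sum_v \sum_w y v * M v w * x w = a.
  by apply: eq_bigr => v _; rewrite /y mulr_sumr; apply: eq_bigr => w _; rewrite mulrA.
have a2 : \sum_v \sum_w x v * M v w * y w = a.
  rewrite exchange_big /=; apply: eq_bigr => w _; rewrite /y [RHS]mulr_sumr.
  by apply: eq_bigr => v _; rewrite Msym; ring.
have expand : forall t, \sum_v \sum_w (x v + t * y v) * M v w * (x w + t * y w)
    = 2 * t * a + t ^+ 2 * b.
  move=> t; clearbody y.
  have -> : \sum_v \sum_w (x v + t * y v) * M v w * (x w + t * y w) =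
    \sum_v \sum_w x v * M v w * x w + t * \sum_v \sum_w y v * M v w * x w
    + t * \sum_v \sum_w x v * M v w * y w + t ^+ 2 * b.
    rewrite /b !mulr_sumr -!big_split /=; apply: eq_bigr => v _.
    rewrite !mulr_sumr -!big_split /=; apply: eq_bigr => w _; ring.
  rewrite qx0 a1 a2; ring.
have a0 : a = 0.
  pose t := - a / (b + 1).
  have b1 : b + 1 != 0 by rewrite gt_eqF // ltr_wpDl.
  have h := psd (fun v => x v + t * y v).
  rewrite /= expand in h.
  have h2 : (2 * t * a + t ^+ 2 * b) * (b + 1) ^+ 2 = - (a ^+ 2 * (b + 2)).
    rewrite /t; field; exact: b1.
  have h3 : 0 <= - (a ^+ 2 * (b + 2)).
    by rewrite -h2 mulr_ge0 // exprn_ge0 // ltW // ltr_wpDl.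
  have h4 : 0 <= a ^+ 2 * (b + 2) by rewrite mulr_ge0 // ?sqr_ge0 // addr_ge0.
  have h5 : a ^+ 2 * (b + 2) = 0 by apply/eqP; rewrite eq_le h4 -oppr_ge0 h3.
  move/eqP: h5; rewrite mulf_eq0 sqrf_eq0 => /orP [/eqP //|].
  by rewrite gt_eqF // ltr_wpDl.
move=> v.
have := @psumr_eq0P R _ xpredT (fun v => y v * y v).
have ge : forall i, xpredT i -> 0 <= y i * y i by move=> i _; rewrite -expr2 sqr_ge0.
move/(_ ge a0 v isT)/eqP.
by rewrite mulf_eq0 orbb => /eqP.
Qed.

End AuxM.
Import AuxM.

Theorem mainTheorem10 (R : realType) (n c : nat) (E : {set {set 'I_n}})
  (lam1 : R) :
  (2 <= c)%N ->
  uniform E c ->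
  E != set0 ->
  (forall v, (0 < hdeg E v)%N) ->
  (* lam1 is the smallest eigenvalue of the normalized Laplacian *)
  eigenvalue (hlaplacian R E) lam1 ->
  (forall mu, eigenvalue (hlaplacian R E) mu -> lam1 <= mu) ->
  (strong_chi E)%:R = (c%:R - lam1) / (1 - lam1) ->
  forall f : {ffun 'I_n -> 'I_(strong_chi E)}, proper_strong E f ->
  forall (v : 'I_n) (i : 'I_(strong_chi E)),
    (#|[set e in E | (v \in e) && [exists w in e, f w == i]]|%:R : R) =
    if f v != i then ((c - 1)%:R * (hdeg E v)%:R) / ((strong_chi E)%:R - 1)
    else (hdeg E v)%:R.
Proof.
move=> c2 unifE En0 hpos eig1 lammin.
move: (strong_chi E) => k hk f pf v0 i0.
case: ifP => [fvi|/negbFE/eqP fvi]; last first.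
  congr (_%:R); apply: eq_card => e; rewrite !inE.
  case: (e \in E) => //=; case ve: (v0 \in e) => //=.
  by apply/existsP; exists v0; rewrite ve fvi eqxx.
have k0 : (0 < k)%N by apply: (leq_ltn_trans (leq0n i0) (ltn_ord i0)).
pose mu := lam1 - 1.
have lam_ne1 : 1 - lam1 != 0.
  apply/eqP => h; move: hk; rewrite h invr0 mulr0 => /eqP.
  by rewrite pnatr_eq0 => /eqP kz; move: k0; rewrite kz.
have h1 : k%:R * (1 - lam1) = c%:R - lam1 by rewrite hk mulfVK.
have cn : (c - 1)%:R = c%:R - 1 :> R by rewrite natrB // ltnW.
have rel : (c - 1)%:R + mu * (k%:R - 1) = 0 :> R.
  rewrite cn /mu; lra.
have cm : (c - 1)%:R = - (mu * (k%:R - 1)) :> R.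
  by apply/eqP; rewrite -addr_eq0 rel.
have k1 : k%:R - 1 != 0 :> R.
  apply/eqP => kk; move: cm; rewrite kk mulr0 oppr0 => /eqP.
  by rewrite pnatr_eq0 subn_eq0 leqNgt => /negP; apply; apply: leq_trans c2.
have kn0 : k%:R != 0 :> R by rewrite pnatr_eq0 -lt0n.
pose d := dg R E.
pose u (j : 'I_k) w : R := (f w == j)%:R.
pose kap := (k%:R)^-1 : R.
pose xi j w := u j w - kap.
pose Mf v w := Wf R E v w - mu * hdegmx R E v w.
pose g j v := \sum_w Wf R E v w * u j w.
pose C v := (c - 1)%:R * d v.
have hD : forall v w, hdegmx R E v w = d v *+ (v == w).
  by move=> v w; rewrite /hdegmx !mxE.
have Wsym : forall v w, Wf R E v w = Wf R E w v.
  by move=> v w; have := congr1 (fun M : 'M[R]_n => M w v) (Wm_sym R E); rewrite !mxE.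
have Msym : forall v w, Mf v w = Mf w v.
  move=> v w; rewrite /Mf Wsym !hD eq_sym.
  by case: eqVneq => [->|]; rewrite ?mulr0n.
have Hmu : forall s, eigenvalue (Sm R E) s -> mu <= s.
  move=> s es; have := lammin _ (eig_link hpos es); rewrite /mu; lra.
have psd : forall x : 'I_n -> R, 0 <= \sum_v \sum_w x v * Mf v w * x w.
  move=> x; have := form_ge hpos Hmu (\row_v x v).
  rewrite !quadE -subr_ge0.
  have -> : \sum_v \sum_w x v * Mf v w * x w =
     \sum_v \sum_w (\row_v x v) 0 v * Wm R E v w * (\row_v x v) 0 w -
     mu * \sum_v \sum_w (\row_v x v) 0 v * hdegmx R E v w * (\row_v x v) 0 w.
    rewrite mulr_sumr -sumrB; apply: eq_bigr => v _.
    rewrite mulr_sumr -sumrB; apply: eq_bigr => w _.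
    rewrite /Mf [in LHS]hD !mxE /d /dg; ring.
  done.
have rowsum : forall v, \sum_w Wf R E v w = C v.
  move=> v; rewrite /C /d /dg -natrM -(sum_nonadj v unifE) natr_sum.
  by apply: eq_bigr => w _; rewrite /Wf; case: (v == w).
have usum : forall w, \sum_j u j w = 1.
  move=> w; rewrite (bigD1 (f w)) //= /u eqxx big1 ?addr0 // => j.
  by rewrite eq_sym => /negbTE ->.
have uu : forall j w, u j w * u j w = u j w.
  by move=> j w; rewrite /u; case: (f w == j); rewrite ?mulr0 ?mulr1.
have gsame : forall v, g (f v) v = 0.
  move=> v; apply: big1 => w _; rewrite /Wf /u.
  case: eqVneq => [->|vw]; first by rewrite mul0r.
  case fw: (f w == f v); last by rewrite mulr0.
  by rewrite (hcommon_same pf vw (esym (eqP fw))) mul0r.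
have gsum : forall v, \sum_j g j v = C v.
  move=> v; rewrite /g exchange_big /= -rowsum; apply: eq_bigr => w _.
  by rewrite -mulr_sumr usum mulr1.
have ugsum : forall v, \sum_j u j v * g j v = 0.
  move=> v; rewrite (bigD1 (f v)) //= /u eqxx mul1r gsame add0r big1 // => j.
  by rewrite eq_sym => /negbTE ->; rewrite mul0r.
have gcount : forall j v, f v != j ->
    g j v = #|[set e in E | (v \in e) && [exists w in e, f w == j]]|%:R.
  move=> j v fvj; rewrite -(sum_color pf fvj) natr_sum.
  by apply: eq_bigr => w _; rewrite natrM /Wf /u; case: (v == w); rewrite ?mul0r ?mulr0 // mulrC.
have Mx : forall j v, \sum_w Mf v w * xi j w = g j v - kap * C v - mu * d v * xi j v.
  move=> j v.
  rewrite (eq_bigr (fun w => Wf R E v w * u j w - kap * Wf R E v w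
                            - mu * (hdegmx R E v w * xi j w))); last first.
    by move=> w _; rewrite /Mf /xi; ring.
  rewrite !sumrB -!mulr_sumr rowsum -/(g j v); congr (_ - _ - _).
  rewrite -mulrA; congr (_ * _).
  rewrite (bigD1 v) //= hD eqxx mulr1n big1 ?addr0 // => w wv.
  by rewrite hD eq_sym (negbTE wv) mulr0n mul0r.
have Qe : forall j, \sum_v \sum_w xi j v * Mf v w * xi j w =
    \sum_v xi j v * (g j v - kap * C v - mu * d v * xi j v).
  move=> j; apply: eq_bigr => v _; rewrite -Mx mulr_sumr.
  by apply: eq_bigr => w _; rewrite mulrA.
have Qsum : \sum_j \sum_v \sum_w xi j v * Mf v w * xi j w = 0.
  under eq_bigr => j _ do rewrite Qe.
  rewrite exchange_big /=; apply: big1 => v _.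
  pose al := - kap * C v - mu * d v + 2 * mu * d v * kap.
  pose be := kap ^+ 2 * C v - mu * d v * kap ^+ 2.
  rewrite (eq_bigr (fun j => u j v * g j v - kap * g j v + u j v * al + be)); last first.
    move=> j _; apply/eqP; rewrite -subr_eq0.
    have -> : xi j v * (g j v - kap * C v - mu * d v * xi j v) -
        (u j v * g j v - kap * g j v + u j v * al + be) =
        mu * d v * (u j v - u j v * u j v).
      rewrite /xi /al /be; ring.
    by rewrite uu subrr mulr0.
  rewrite !big_split /= ugsum !sumrN -mulr_sumr gsum -mulr_suml usum.
  rewrite !sumr_const !card_ord.
  rewrite /al /C /kap cm; move: (d v) => D; field; exact: kn0.
have Q0 : \sum_v \sum_w xi i0 v * Mf v w * xi i0 w = 0.
  exact: (@psumr_eq0P R _ xpredT (fun j => \sum_v \sum_w xi j v * Mf v w * xi j w)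
           (fun j _ => psd (xi j)) Qsum i0 isT).
have := psd_ker Msym psd Q0 v0; rewrite Mx /xi /u (negbTE fvi) => h.
rewrite -(gcount i0 v0 fvi).
have gv : g i0 v0 = kap * C v0 - mu * d v0 * kap.
  by rewrite -[LHS]subr0 -h /=; ring.
have mue : mu = - (c - 1)%:R / (k%:R - 1) by rewrite cm; field; exact: k1.
rewrite gv /C /kap mue /d /dg.
move: ((c - 1)%:R : R) ((hdeg E v0)%:R : R) kn0 k1; move: (k%:R : R) => K Cc D Kn0 K1.
by field; rewrite Kn0 K1.
Qed.
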